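(* Let $\sigma=\langle\mathcal V,\mathcal C,S,B\rangle$ be an approval-based multi-winner election, and fix any run of ODH on $\sigma$, with arbitrary choices of the functions $F$ and arbitrary tie-breaking. For $i=0,\dots,S-1$, let $\mathcal C_e^i$ be the set of the first $i$ candidates chosen in this run, with $\mathcal C_e^0=\emptyset$. Then for every $c\in\mathcal C\setminus\mathcal C_e^i$ and every $F\in\mathfrak F^{\mathrm{opt}}_{\sigma,\mathcal C_e^i\cup\{c\}}$, $$\mathrm{Supp}_F(c)=\mathrm{maxMin}(\sigma,\mathcal C_e^i\cup\{c\}).$$ In particular, the value $s_c$ computed by ODH at each iteration does not depend on the choice of $F$.
   Context: An approval-based multi-winner election is a tuple $\sigma=\langle \mathcal V,\mathcal C,S,B\rangle$, where $\mathcal V$ is a finite set of agents, $\mathcal C$ is a finite set of candidates, $1\le S\le|\mathcal C|$ is an integer, and $B:2^{\mathcal C}\to\mathbb N$ gives, for each $\mathcal A\subseteq\mathcal C$, the number $B(\mathcal A)$ of agents whose ballot is exactly $\mathcal A$ (with $\sum_{\mathcal A}B(\mathcal A)\le|\mathcal V|$). For a non-empty $\mathcal A\subseteq\mathcal C$, the family $\mathfrak F_{\sigma,\mathcal A}$ is the set of all $F:2^{\mathcal C}\times\mathcal A\to\mathbb R$ such that: - $F(y,c)\ge0$ for all $y$ and $c$; - $F(y,c)=0$ if $c\notin y$; - $\sum_{c\in\mathcal A\cap y}F(y,c)=B(y)$ whenever $y\cap\mathcal A\neq\emptyset$. We write $\mathrm{Supp}_F(c)=\sum_yF(y,c)$ and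 $\mathrm{maxMin}(\sigma,\mathcal A)=\sup_{F\in\mathfrak F_{\sigma,\mathcal A}}\min_{c\in\mathcal A}\mathrm{Supp}_F(c)$. We also write $\mathfrak F^{\mathrm{opt}}_{\sigma,\mathcal A}=\{F\in\mathfrak F_{\sigma,\mathcal A}:\mathrm{Supp}_F(c)\ge\mathrm{maxMin}(\sigma,\mathcal A)\ \forall c\in\mathcal A\}$, which is non-empty. The Open D'Hondt (ODH) rule proceeds as follows. Start with $\mathcal C_e=\emptyset$ and repeat $S$ times: - for each $c\in\mathcal C\setminus\mathcal C_e$, choose any $F\in\mathfrak F^{\mathrm{opt}}_{\sigma,\mathcal C_e\cup\{c\}}$ and set $s_c=\mathrm{Supp}_F(c)$; - then add to $\mathcal C_e$ some $w\in\mathcal C\setminus\mathcal C_e$ with $s_w=\max_{c\in\mathcal C\setminus\mathcal C_e}s_c$ (ties broken arbitrarily). Finally, output $\mathcal C_e$. *)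

(* Defs.v *)
From Stdlib Require Import Reals ClassicalEpsilon.
From mathcomp Require Import all_boot.

Set Implicit Arguments.
Unset Strict Implicit.
Unset Printing Implicit Defensive.

Section ODH.
Variable C : finType.
Variable B : {set C} -> nat.   (* B y = number of agents whose ballot is exactly y *)

Definition Supp (F : {set C} -> C -> R) (c : C) : R :=
  \big[Rplus/R0]_(y : {set C}) F y c.

(* F in \mathfrak F_{sigma,A}.  F is given as a function on all of
   2^C x C, but only its values on 2^C x A are constrained/used. *)
Definition in_family (A : {set C}) (F : {set C} -> C -> R) : Prop :=
  (forall (y : {set C}) (c : C), c \in A -> Rle R0 (F y c)) /\
  (forall (y : {set C}) (c : C), c \in A -> c \notin y -> F y c = R0) /\
  (forall y : {set C}, (y :&: A != set0) ->
     \big[Rplus/R0]_(c in A :&: y) F y c = INR (B y)).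

Definition minSupp_values (A : {set C}) (v : R) : Prop :=
  exists F, in_family A F /\
    (forall c, c \in A -> Rle v (Supp F c)) /\
    (exists2 c, c \in A & v = Supp F c).

Definition maxMin (A : {set C}) : R :=
  epsilon (inhabits R0) (fun m => is_lub (minSupp_values A) m).

Definition in_opt_family (A : {set C}) (F : {set C} -> C -> R) : Prop :=
  in_family A F /\ (forall c, c \in A -> Rle (maxMin A) (Supp F c)).

(* The run is recorded by the sequence w 0, w 1, ..., w (S-1) of chosen
   candidates; C_e^i = { w j | j < i } is the set of the first i chosen. *)
Definition chosen (w : nat -> C) (i : nat) : {set C} :=
  [set w (nat_of_ord j) | j : 'I_i].

(* w is a run of ODH with S seats, for some choice of the functions F
   (one F_c in F^opt_{sigma, C_e u {c}} per remaining candidate c, giving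
   s_c = Supp_{F_c}(c)) and some tie-breaking (w i is any maximiser). *)
Definition is_ODH_run (S : nat) (w : nat -> C) : Prop :=
  forall i, (i < S)%N ->
    w i \notin chosen w i /\
    exists Fs : C -> ({set C} -> C -> R),
      (forall c, c \notin chosen w i ->
         in_opt_family (c |: chosen w i) (Fs c)) /\
      (forall c, c \notin chosen w i ->
         Rle (Supp (Fs c) c) (Supp (Fs (w i)) (w i))).
End ODH.

(* Main.v *)
From HB Require Import structures.
Require Import Defs.
From Stdlib Require Import Reals Lra Classical ClassicalEpsilon.
From mathcomp Require Import all_boot.

Set Implicit Arguments.
Unset Strict Implicit.
Unset Printing Implicit Defensive.

Lemma RplusA : associative Rplus. Proof. by move=> *; rewrite Rplus_assoc. Qed.
HB.instance Definition _ := Monoid.isComLaw.Build R R0 Rplus RplusA Rplus_comm Rplus_0_l.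

Lemma sumR_le (I : Type) (r : seq I) (P : pred I) (F G : I -> R) :
  (forall i, P i -> Rle (F i) (G i)) ->
  Rle (\big[Rplus/R0]_(i <- r | P i) F i) (\big[Rplus/R0]_(i <- r | P i) G i).
Proof.
move=> h; apply: (big_ind2 (fun a b => Rle a b)); first lra.
  by move=> *; lra.
exact: h.
Qed.

Lemma sumR_ge0 (I : Type) (r : seq I) (P : pred I) (F : I -> R) :
  (forall i, P i -> Rle R0 (F i)) -> Rle R0 (\big[Rplus/R0]_(i <- r | P i) F i).
Proof.
move=> h; apply: (big_ind (fun a => Rle R0 a)); first lra.
  by move=> *; lra.
exact: h.
Qed.

Lemma sum_subset (T : finType) (P Q : {set T}) (g : T -> R) :
  P \subset Q -> (forall x, x \in Q -> Rle R0 (g x)) ->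
  Rle (\big[Rplus/R0]_(x in P) g x) (\big[Rplus/R0]_(x in Q) g x).
Proof.
move=> sPQ h; rewrite (big_setID (A:=Q) P) /=.
rewrite (setIidPr sPQ).
have : Rle R0 (\big[Rplus/R0]_(x in Q :\: P) g x).
  by apply: sumR_ge0 => x; rewrite inE => /andP[_ ]; apply: h.
lra.
Qed.

Lemma term_le_sum (T : finType) (Q : {set T}) (g : T -> R) i :
  i \in Q -> (forall x, x \in Q -> Rle R0 (g x)) ->
  Rle (g i) (\big[Rplus/R0]_(x in Q) g x).
Proof.
move=> iQ h; rewrite (bigD1 i) //=.
have : Rle R0 (\big[Rplus/R0]_(x in Q | x != i) g x).
  by apply: sumR_ge0 => x /andP[/h].
lra.
Qed.

Lemma sum_indic (T : finType) (y0 : T) (a : R) :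
  \big[Rplus/R0]_(y : T) (if y == y0 then a else R0) = a.
Proof.
rewrite (bigD1 y0) //= eqxx big1; first lra.
by move=> y /negbTE ->.
Qed.

Lemma sum_cond (T : finType) (P Q : {set T}) (h : T -> R) :
  \big[Rplus/R0]_(x in P) (if x \in Q then h x else R0) =
  \big[Rplus/R0]_(x in P :&: Q) h x.
Proof.
rewrite big_mkcond [RHS]big_mkcond; apply: eq_bigr => x _.
by rewrite inE; case: (x \in P); case: (x \in Q).
Qed.
Lemma argmin_set (C : finType) (S : {set C}) (g : C -> R) x0 :
  x0 \in S -> exists2 x, x \in S & forall x', x' \in S -> Rle (g x) (g x').
Proof.
move=> x0S.
suff [x xin hx] : exists2 x, x \in x0 :: enum S &
    forall x', x' \in x0 :: enum S -> Rle (g x) (g x').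
  exists x.
    by move: xin; rewrite inE mem_enum => /orP[/eqP->|].
  by move=> x' x'S; apply: hx; rewrite inE mem_enum x'S orbT.
elim: (enum S) => [|a s [x xin hx]].
  by exists x0; rewrite ?inE // => x'; rewrite inE => /eqP->; lra.
case: (Rle_dec (g x) (g a)) => hxa.
  exists x; first by move: xin; rewrite !inE => /orP[->|->]; rewrite ?orbT.
  move=> x'; rewrite !inE => /or3P[/eqP->|/eqP->|x's]; first (by apply: hx; rewrite inE eqxx); first by [].
  by apply: hx; rewrite inE x's orbT.
exists a; first by rewrite !inE eqxx orbT.
move=> x'; rewrite !inE => /or3P[/eqP->|/eqP->|x's]; last 1 first.
- have := hx x'; rewrite inE x's orbT => /(_ isT); lra.
- have := hx x0; rewrite inE eqxx => /(_ isT); lra.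
- lra.
Qed.

Lemma extend (C : finType) (B : {set C} -> nat) (X : {set C}) (f : {set C} -> C -> R) :
  (forall (y : {set C}) (x : C), Rle R0 (f y x)) -> (forall (y : {set C}) (x : C), x \notin y -> f y x = R0) ->
  (forall y : {set C}, y :&: X != set0 -> Rle (\big[Rplus/R0]_(x in X :&: y) f y x) (INR (B y))) ->
  exists H, in_family B X H /\ forall (y : {set C}) (x : C), Rle (f y x) (H y x).
Proof.
move=> f0 fout fsum.
pose r y := Rminus (INR (B y)) (\big[Rplus/R0]_(x in X :&: y) f y x).
pose H y x := Rplus (f y x) (if [pick z in X :&: y] is Some z then
                   (if x == z then r y else R0) else R0).
have rpos y z : z \in X :&: y -> Rle R0 (r y).
  move=> zXy; have : y :&: X != set0.
    by apply/set0Pn; exists z; move: zXy; rewrite !inE andbC.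
  move/fsum; rewrite /r; lra.
exists H; split; last first.
  move=> y x; rewrite /H; case: pickP => [z zXy|_]; last lra.
  case: (x == z); last lra.
  have := rpos _ _ zXy; lra.
split; [|split].
- move=> y x _; rewrite /H; have := f0 y x.
  case: pickP => [z zXy|_]; last lra.
  case: (x == z); last lra.
  have := rpos _ _ zXy; lra.
- move=> y x _ xy; rewrite /H fout //; case: pickP => [z zXy|_]; last lra.
  case: eqP => [exz|]; last lra.
  by move: zXy; rewrite inE -exz (negbTE xy) andbF.
- move=> y yX; rewrite /H big_split /=.
  case: pickP => [z zXy|]; last first.
    move=> h; exfalso; move/set0Pn: yX => [z]; rewrite inE => /andP[zy zX].
    by have := h z; rewrite inE zX zy.
  have -> : \big[Rplus/R0]_(i in X :&: y) (if i == z then r y else R0) = r y.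
    rewrite (bigD1 z) //= eqxx big1; first lra.
    by move=> x /andP[_ /negbTE ->].
  rewrite /r; lra.
Qed.

Lemma supp_le (C : finType) (F G : {set C} -> C -> R) x :
  (forall y, Rle (F y x) (G y x)) -> Rle (Supp F x) (Supp G x).
Proof. by move=> h; apply: sumR_le. Qed.

Lemma fam_nonempty (C : finType) (B : {set C} -> nat) (X : {set C}) :
  exists H, in_family B X H.
Proof.
have hs : forall y : {set C}, y :&: X != set0 ->
    Rle (\big[Rplus/R0]_(x in X :&: y) (fun _ _ => R0) y x) (INR (B y)).
  by move=> y _; rewrite big1 //; apply: pos_INR.
have [H [hH _]] := @extend C B X (fun _ _ => R0) (fun _ _ => Rle_refl R0) (fun _ _ _ => erefl) hs.
by exists H.
Qed.

Lemma maxMin_lub (C : finType) (B : {set C} -> nat) (X : {set C}) x0 :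
  x0 \in X -> is_lub (minSupp_values B X) (maxMin B X).
Proof.
move=> x0X; rewrite /maxMin; apply: epsilon_spec.
have [m hm] : {m | is_lub (minSupp_values B X) m}; last by exists m.
apply: completeness.
- exists (\big[Rplus/R0]_(y : {set C}) INR (B y)).
  move=> v [F [[f0 [fout fsum]] [_ [c cX ->]]]].
  apply: sumR_le => y _.
  case cy: (c \in y); last by rewrite fout ?cy //; apply: pos_INR.
  have yX : y :&: X != set0 by apply/set0Pn; exists c; rewrite inE cy.
  rewrite -(fsum y yX); apply: (term_le_sum (Q := X :&: y) (g := F y)).
    by rewrite inE cX.
  by move=> x; rewrite inE => /andP[xX _]; apply: f0.
- have [H hH] := fam_nonempty B X.
  have [x xX hx] := argmin_set (Supp H) x0X.
  by exists (Supp H x); exists H; split=> //; split=> //; exists x.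
Qed.

Lemma L1 (C : finType) (B : {set C} -> nat) (X : {set C}) H v x0 :
  x0 \in X -> in_family B X H -> (forall x, x \in X -> Rle v (Supp H x)) ->
  Rle v (maxMin B X).
Proof.
move=> x0X hH hv.
have [x xX hx] := argmin_set (Supp H) x0X.
have [ub _] := maxMin_lub B x0X.
have : Rle (Supp H x) (maxMin B X) by apply: ub; exists H; split=> //; split=> //; exists x.
have := hv x xX; lra.
Qed.

Lemma lowmin (C : finType) (B : {set C} -> nat) (X : {set C}) H x0 :
  x0 \in X -> in_family B X H -> exists2 x, x \in X & Rle (Supp H x) (maxMin B X).
Proof.
move=> x0X hH.
have [x xX hx] := argmin_set (Supp H) x0X.
have [ub _] := maxMin_lub B x0X.
by exists x => //; apply: ub; exists H; split=> //; split=> //; exists x.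
Qed.

Lemma approx (C : finType) (B : {set C} -> nat) (X : {set C}) v x0 :
  x0 \in X -> Rlt v (maxMin B X) ->
  exists H, in_family B X H /\ forall x, x \in X -> Rle v (Supp H x).
Proof.
move=> x0X hv.
case: (classic (exists H, in_family B X H /\ forall x, x \in X -> Rle v (Supp H x))) => // hn.
exfalso.
have [_ lub] := maxMin_lub B x0X.
have : Rle (maxMin B X) v; last lra.
apply: lub => u [H [hH [hu [c cX eu]]]]; subst u.
case: (classic (forall x, x \in X -> Rlt v (Supp H x))) => hall.
  by exfalso; apply: hn; exists H; split=> // x /hall; lra.
have [x hx] := not_all_ex_not _ _ hall.
have [xX hxv] := imply_to_and _ _ hx.
have := Rnot_lt_le _ _ hxv; have := hu x xX; lra.
Qed.

Lemma mono (C : finType) (B : {set C} -> nat) (X Y : {set C}) x0 :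
  x0 \in X -> X \subset Y -> Rle (maxMin B Y) (maxMin B X).
Proof.
move=> x0X sXY.
have x0Y : x0 \in Y by apply: (subsetP sXY).
have [_ lub] := maxMin_lub B x0Y.
apply: lub => u [H [[h0 [hout hsum]] [hu [c cY eu]]]].
have [||| H' [hH' hle]] := @extend C B X (fun y x => if x \in X then H y x else R0).
- move=> y x; case: ifP => xX; last lra.
  by apply: h0; apply: (subsetP sXY).
- move=> y x xy; case: ifP => xX //; apply: hout => //; exact: (subsetP sXY).
- move=> y yX.
  have yY : y :&: Y != set0.
    move/set0Pn: yX => [z]; rewrite inE => /andP[zy zX].
    by apply/set0Pn; exists z; rewrite inE zy (subsetP sXY).
  rewrite -(hsum y yY).
  apply: Rle_trans (sum_subset (P := X :&: y) (Q := Y :&: y) (g := H y) _ _).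
  + by apply: Req_le; apply: eq_bigr => x; rewrite inE => /andP[->].
  + by apply: setSI.
  + by move=> x; rewrite inE => /andP[/h0].
have [x xX hx] := lowmin x0X hH'.
subst u; apply: (Rle_trans _ _ _ (hu x (subsetP sXY x xX))).
apply: (Rle_trans _ _ _ _ hx).
by apply: supp_le => y; have := hle y x; rewrite xX.
Qed.
Lemma glue (C : finType) (B : {set C} -> nat) (A E X : {set C})
  (K G : {set C} -> C -> R) (v d : R) :
  X \subset A -> in_family B A K ->
  (forall (y : {set C}) (x : C), x \in A -> x \notin E -> y :&: E != set0 -> K y x = R0) ->
  (forall x, x \in A -> x \notin E -> Rle d (Supp K x)) -> Rle v d ->
  in_family B (X :&: E) G -> (forall x, x \in X :&: E -> Rle v (Supp G x)) ->
  exists H, in_family B X H /\ forall x, x \in X -> Rle v (Supp H x).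
Proof.
move=> sXA [k0 [kout ksum]] hcl hd hvd [g0 [gout gsum]] hG.
pose f (y : {set C}) (x : C) := if x \in X then (if x \in E then G y x
   else if y :&: E == set0 then K y x else R0) else R0.
have [||| H [hH hle]] := @extend C B X f.
- move=> y x; rewrite /f; case: ifP => xX; last lra.
  case: ifP => xE; first by apply: g0; rewrite inE xX.
  case: ifP => _; last lra.
  by apply: k0; apply: (subsetP sXA).
- move=> y x xy; rewrite /f; case: ifP => xX //.
  case: ifP => xE; first by apply: gout => //; rewrite inE xX.
  by case: ifP => _ //; apply: kout => //; apply: (subsetP sXA).
- move=> y yX.
  have yA : y :&: A != set0.
    move/set0Pn: yX => [z]; rewrite inE => /andP[zy zX].
    by apply/set0Pn; exists z; rewrite inE zy (subsetP sXA).
  case: (boolP (y :&: E == set0)) => yE.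
  + rewrite -(ksum y yA).
    apply: (Rle_trans _ (\big[Rplus/R0]_(x in X :&: y) K y x)).
      apply: Req_le; apply: eq_bigr => x; rewrite inE => /andP[xX xy].
      rewrite /f xX yE; case: ifP => // xE.
      by move/eqP: yE => /setP/(_ x); rewrite !inE xy xE.
    apply: sum_subset; first by apply: setSI.
    by move=> x; rewrite inE => /andP[/k0].
  + apply: (Rle_trans _ (\big[Rplus/R0]_(x in X :&: y) (if x \in E then G y x else R0))).
      apply: Req_le; apply: eq_bigr => x; rewrite inE => /andP[xX xy].
      by rewrite /f xX (negbTE yE); case: ifP.
    rewrite sum_cond.
    have -> : X :&: y :&: E = X :&: E :&: y by rewrite -!setIA (setIC y).
    case: (boolP (y :&: (X :&: E) == set0)) => hy.
      rewrite big1; first by apply: pos_INR.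
      move=> x xin; exfalso; move/eqP: hy => /setP/(_ x).
      by move: xin; rewrite !inE => /andP[/andP[-> ->] ->].
    by rewrite gsum //; apply: Rle_refl.
exists H; split=> // x xX.
apply: (Rle_trans _ (Supp f x)); last by apply: supp_le.
case: (boolP (x \in E)) => xE.
  have -> : Supp f x = Supp G x by apply: eq_bigr => y _; rewrite /f xX xE.
  by apply: hG; rewrite inE xX.
have xA : x \in A by apply: (subsetP sXA).
have -> : Supp f x = Supp K x.
  apply: eq_bigr => y _; rewrite /f xX (negbTE xE).
  by case: ifP => // /negbT yE; rewrite hcl.
by apply: (Rle_trans _ d); [|apply: hd].
Qed.

Lemma glue_max (C : finType) (B : {set C} -> nat) (A E X : {set C})
  (K : {set C} -> C -> R) (d : R) x0 :
  x0 \in X -> X \subset A -> in_family B A K ->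
  (forall (y : {set C}) (x : C), x \in A -> x \notin E -> y :&: E != set0 -> K y x = R0) ->
  (forall x, x \in A -> x \notin E -> Rle d (Supp K x)) ->
  (X :&: E = set0 \/ Rle d (maxMin B (X :&: E))) ->
  Rle d (maxMin B X).
Proof.
move=> x0X sXA hK hcl hd hQ.
apply: Rnot_lt_le => hlt.
pose v := Rdiv (Rplus (maxMin B X) d) 2.
have [G [hG hGv]] : exists G, in_family B (X :&: E) G /\
    forall x, x \in X :&: E -> Rle v (Supp G x).
  case: hQ => [Q0|hQ].
    have [G hG] := fam_nonempty B (X :&: E).
    by exists G; split=> // x; rewrite Q0 inE.
  case: (set_0Vmem (X :&: E)) => [Q0|[q qQ]].
    have [G hG] := fam_nonempty B (X :&: E).
    by exists G; split=> // x; rewrite Q0 inE.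
  apply: (approx qQ); rewrite /v; lra.
have hvd : Rle v d by rewrite /v; lra.
have [H [hH hHv]] := glue sXA hK hcl hd hvd hG hGv.
have := L1 x0X hH hHv; rewrite /v; lra.
Qed.
Definition Rleb (a b : R) : bool := if Rle_dec a b then true else false.

Lemma RlebP a b : reflect (Rle a b) (Rleb a b).
Proof. by rewrite /Rleb; case: Rle_dec => h; constructor. Qed.

Lemma chosenP (C : finType) (w : nat -> C) j x :
  reflect (exists2 k, (k < j)%N & x = w k) (x \in chosen w j).
Proof.
apply: (iffP imsetP) => [[k _ ->]|[k kj ->]]; first by exists k.
by exists (Ordinal kj).
Qed.

Lemma chosen0 (C : finType) (w : nat -> C) : chosen w 0 = set0.
Proof. by apply/setP => x; rewrite inE; apply/chosenP => -[]. Qed.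

Lemma chosenS (C : finType) (w : nat -> C) j : chosen w j.+1 = w j |: chosen w j.
Proof.
apply/setP => x; rewrite !inE; apply/chosenP/orP.
  move=> [k]; rewrite ltnS leq_eqVlt => /orP[/eqP->|kj] ->; first by left.
  by right; apply/chosenP; exists k.
case=> [/eqP->|/chosenP[k kj ->]]; first by exists j.
by exists k => //; apply: ltnW.
Qed.

Lemma chosen_mono (C : finType) (w : nat -> C) j i :
  (j <= i)%N -> chosen w j \subset chosen w i.
Proof.
move=> ji; apply/subsetP => x /chosenP[k kj ->]; apply/chosenP; exists k => //.
exact: leq_trans kj ji.
Qed.
Lemma push (C : finType) (B : {set C} -> nat) (A : {set C}) (K : {set C} -> C -> R)
  (m : R) (c : C) (y : {set C}) (x z : C) :
  in_family B A K -> (forall x', x' \in A -> Rle m (Supp K x')) -> Rlt m (Supp K c) ->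
  x \in A -> Rlt m (Supp K x) -> Rlt R0 (K y x) -> z \in A -> z \in y ->
  ~ Rlt m (Supp K z) ->
  exists K', [/\ in_family B A K', (forall x', x' \in A -> Rle m (Supp K' x')),
    Rlt m (Supp K' c) &
    (#|[set x' in A | Rleb (Supp K' x') m]| < #|[set x' in A | Rleb (Supp K x') m]|)%N].
Proof.
move=> [k0 [kout ksum]] hge hc xA hx hyx zA zy hz.
have hz' := Rnot_lt_le _ _ hz.
have xz : x != z by apply/eqP => exz; subst z; lra.
have xy : x \in y by apply/negPn/negP => /(kout y x xA) e; lra.
pose e := Rdiv (Rmin (K y x) (Rminus (Supp K x) m)) 2.
have e1 : Rle e (Rdiv (K y x) 2) by have := Rmin_l (K y x) (Rminus (Supp K x) m); rewrite /e; lra.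
have e2 : Rle e (Rdiv (Rminus (Supp K x) m) 2).
  by have := Rmin_r (K y x) (Rminus (Supp K x) m); rewrite /e; lra.
have e0 : Rlt R0 e.
  have : Rlt R0 (Rmin (K y x) (Rminus (Supp K x) m)) by apply: Rmin_pos; lra.
  rewrite /e; lra.
pose dl (x' : C) := if x' == z then e else if x' == x then Ropp e else R0.
pose K' (y' : {set C}) (x' : C) := Rplus (K y' x') (if y' == y then dl x' else R0).
have hS x' : Supp K' x' = Rplus (Supp K x') (dl x').
  by rewrite /Supp /K' big_split /= sum_indic.
have Sz : Supp K' z = Rplus (Supp K z) e by rewrite hS /dl eqxx.
have Sx : Supp K' x = Rminus (Supp K x) e by rewrite hS /dl (negbTE xz) eqxx; lra.
have So x' : x' != z -> x' != x -> Supp K' x' = Supp K x'.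
  by move=> /negbTE h1 /negbTE h2; rewrite hS /dl h1 h2; lra.
exists K'; split.
- split; [|split].
  + move=> y' x' x'A; rewrite /K'; have := k0 y' x' x'A.
    case: eqP => [->|_]; last lra.
    rewrite /dl; case: eqP => _; first lra.
    case: eqP => [->|_]; lra.
  + move=> y' x' x'A x'y; rewrite /K' kout //.
    case: eqP => [ey|_]; last lra.
    subst y'; rewrite /dl; case: eqP => [ex|_]; first by subst x'; rewrite zy in x'y.
    by case: eqP => [ex|_]; [subst x'; rewrite xy in x'y|lra].
  + move=> y' y'A; rewrite /K' big_split /= ksum //.
    case: eqP => [ey|_]; last by rewrite big1 //; lra.
    subst y'.
    rewrite (bigD1 z) /=; last by rewrite inE zA zy.
    rewrite (bigD1 x) /=; last by rewrite inE xA xy xz.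
    rewrite big1; last by move=> x' /andP[/andP[_ /negbTE h1] /negbTE h2]; rewrite /dl h1 h2.
    by rewrite /dl eqxx (negbTE xz) eqxx; lra.
- move=> x' x'A.
  case: (eqVneq x' z) => [->|h1]; first by rewrite Sz; have := hge z zA; lra.
  case: (eqVneq x' x) => [->|h2]; first by rewrite Sx; lra.
  by rewrite So //; apply: hge.
- case: (eqVneq c z) => [ecz|h1]; first by subst c; lra.
  case: (eqVneq c x) => [->|h2]; first by rewrite Sx; lra.
  by rewrite So.
- set L := [set x' in A | Rleb (Supp K x') m].
  have zL : z \in L by rewrite inE zA; apply/RlebP.
  apply: (@leq_ltn_trans #|L :\ z|); last by rewrite (cardsD1 z L) zL.
  apply: subset_leq_card; apply/subsetP => x'; rewrite !inE => /andP[x'A /RlebP h].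
  case: (eqVneq x' z) => [ex|h1]; first by subst x'; rewrite Sz in h; exfalso; have := hge z zA; lra.
  case: (eqVneq x' x) => [ex|h2]; first by subst x'; rewrite Sx in h; lra.
  by rewrite x'A /=; apply/RlebP; rewrite -So.
Qed.
Lemma closed_case (C : finType) (B : {set C} -> nat) (S : nat) (w : nat -> C)
  (hrun : is_ODH_run B S w) (i : nat) (hi : (i < S)%N)
  (IH : forall j, (j < i)%N -> forall F, in_opt_family B (w j |: chosen w j) F ->
          Supp F (w j) = maxMin B (w j |: chosen w j))
  (c : C) (hc : c \notin chosen w i) (K : {set C} -> C -> R) :
  let A := c |: chosen w i in let m := maxMin B A in
  in_family B A K -> (forall x, x \in A -> Rle m (Supp K x)) -> Rlt m (Supp K c) ->
  (forall y x z, x \in A -> Rlt m (Supp K x) -> Rlt R0 (K y x) -> z \in A -> z \in y ->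
     Rlt m (Supp K z)) -> False.
Proof.
move=> A m hK hge hc' hcl.
have cA : c \in A by rewrite /A setU11.
pose E := [set x in A | Rleb (Supp K x) m].
pose D := [set x in A | ~~ Rleb (Supp K x) m].
have cD : c \in D by rewrite inE cA /=; apply/RlebP; lra.
have [xs xsD hxs] := argmin_set (Supp K) cD.
have hmd : Rlt m (Supp K xs).
  by move: xsD; rewrite inE => /andP[_ /RlebP h]; apply: Rnot_le_lt.
pose d := Supp K xs.
have hd : forall x, x \in A -> x \notin E -> Rle d (Supp K x).
  by move=> x xA xE; apply: hxs; rewrite inE xA; move: xE; rewrite inE xA.
have hcl' : forall (y : {set C}) (x : C), x \in A -> x \notin E -> y :&: E != set0 -> K y x = R0.
  move=> y x xA xE /set0Pn [z]; rewrite in_setI => /andP[zy]; rewrite in_set => /andP[zA /RlebP hz].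
  have hx : Rlt m (Supp K x).
    by move: xE; rewrite inE xA /= => /RlebP h; apply: Rnot_le_lt.
  case: hK => [k0 _].
  have := k0 y x xA; case/Rle_lt_or_eq_dec => // h.
  by have := hcl y x z xA hx h zA zy; lra.
have sub j : (j <= i)%N -> c |: chosen w j \subset A.
  by move=> ji; rewrite /A; apply: setUS; apply: chosen_mono.
have chain : forall j, (j <= i)%N ->
    (c |: chosen w j) :&: E = set0 \/ Rle d (maxMin B ((c |: chosen w j) :&: E)).
  elim=> [_|j IHj ji].
    left; apply/setP => x; rewrite chosen0 setU0 !inE.
    case: eqP => // ->; rewrite /=; apply/negbTE/RlebP; lra.
  have ji' : (j <= i)%N by apply: ltnW.
  have h1 := glue_max (setU11 c (chosen w j)) (sub j ji') hK hcl' hd (IHj ji').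
  have jS : (j < S)%N by apply: leq_trans hi.
  have [wj [Fs [hFs hFsle]]] := hrun j jS.
  have cj : c \notin chosen w j.
    by apply: contra hc; apply: (subsetP (chosen_mono w ji')).
  have h2 : Rle (maxMin B (c |: chosen w j)) (Supp (Fs c) c).
    by have [_ h] := hFs c cj; apply: h; rewrite setU11.
  have h3 := hFsle c cj.
  have h4 := IH j ji (Fs (w j)) (hFs (w j) wj).
  rewrite -chosenS in h4.
  case: (set_0Vmem ((c |: chosen w j.+1) :&: E)) => [Q0|[q qQ]]; first by left.
  right.
  apply: (Rle_trans _ (maxMin B (chosen w j.+1))); first lra.
  apply: (@mono C B _ (chosen w j.+1) q qQ); apply/subsetP => x; rewrite in_setI => /andP[]; rewrite in_setU1 => /orP[/eqP->|//] xE.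
  by move: xE; rewrite in_set cA /=; move/RlebP; lra.
have := glue_max cA (subxx A) hK hcl' hd.
have -> : A :&: E = (c |: chosen w i) :&: E by [].
move=> /(_ (chain i (leqnn i))).
rewrite -/m /d; lra.
Qed.
Unset Implicit Arguments.
Set Strict Implicit.
Theorem theorem2 (C : finType) (nV S : nat) (B : {set C} -> nat)
  (hS1 : (1 <= S)%N) (hSC : (S <= #|C|)%N)
  (hB : (\sum_(A : {set C}) B A <= nV)%N)
  (w : nat -> C) (hrun : is_ODH_run B S w) :
  forall i, (i < S)%N ->
  forall c, c \notin chosen w i ->
  forall F, in_opt_family B (c |: chosen w i) F ->
    Supp F c = maxMin B (c |: chosen w i).
Proof.
move=> i; elim/ltn_ind: i => i IHi hi c hc F [hF hopt].
have IH : forall j, (j < i)%N -> forall F, in_opt_family B (w j |: chosen w j) F ->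
          Supp F (w j) = maxMin B (w j |: chosen w j).
  move=> j ji F' hF'; apply: (IHi j ji (ltn_trans ji hi)) => //.
  by have [] := hrun j (ltn_trans ji hi).
set A := c |: chosen w i.
set m := maxMin B A.
have cA : c \in A by rewrite /A setU11.
have hge := hopt c cA.
apply: Rle_antisym; last exact: hge.
apply: Rnot_lt_le => hlt.
suff : forall n K, in_family B A K -> (forall x, x \in A -> Rle m (Supp K x)) ->
    Rlt m (Supp K c) -> (#|[set x in A | Rleb (Supp K x) m]| < n)%N -> False.
  by move/(_ _ F hF hopt hlt (ltnSn _)).
elim=> [//|n IHn] K hK hgeK hcK hn.
case: (classic (forall y x z, x \in A -> Rlt m (Supp K x) -> Rlt R0 (K y x) ->
     z \in A -> z \in y -> Rlt m (Supp K z))) => hcl.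
  exact: (closed_case hrun hi IH hc hK hgeK hcK hcl).
have [y hy] := not_all_ex_not _ _ hcl.
have [x hx] := not_all_ex_not _ _ hy.
have [z hz] := not_all_ex_not _ _ hx.
have [xA hz1] := imply_to_and _ _ hz.
have [hxm hz2] := imply_to_and _ _ hz1.
have [hyx hz3] := imply_to_and _ _ hz2.
have [zA hz4] := imply_to_and _ _ hz3.
have [zy hzm] := imply_to_and _ _ hz4.
have [K' [hK' hge' hc' hlt']] := push hK hgeK hcK xA hxm hyx zA zy hzm.
apply: (IHn K' hK' hge' hc').
by apply: leq_trans hlt' _.
Qed.
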